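(* Let $q$ be an odd prime power, $n$ a positive integer with $n\mid(q-1)$, $\lambda\in\mathbb{F}_q^{*}$ with multiplicative order dividing $\frac{q-1}{n}$, and let $\alpha_1,\dots,\alpha_n\in\mathbb{F}_q^{*}$ be the (pairwise distinct) roots of $x^n-\lambda$, i.e. $x^n-\lambda=\prod_{i=1}^n(x-\alpha_i)$, in some fixed order. Let $\ell\ge0$, $\boldsymbol\eta=(\eta_0,\dots,\eta_\ell)\in\mathbb{F}_q^{\ell+1}\setminus\{\boldsymbol0\}$, and let $k$ be an integer with $2\le k\le\frac{n-2\ell-1}{2}$. Let $\boldsymbol v=(v_1,\dots,v_n)$ with $v_i\in\{-1,1\}$ for $1\le i\le n-k+1$ and $v_i\in\mathbb{F}_q\setminus\{-1,0,1\}$ for $n-k+2\le i\le n$. Then the $( * )$-$(\mathcal{L},\mathcal{P})$-TGRS code $\mathcal{C}$ is an LCD code, i.e. $\mathcal{C}\cap\mathcal{C}^{\perp}=\{\boldsymbol0\}$.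
   Context: The $( * )$-$(\mathcal{L},\mathcal{P})$-TGRS code is $\mathcal{C}=\{(v_1f(\alpha_1),\dots,v_nf(\alpha_n)) : f\in\mathcal{F}_{n,k,\boldsymbol\eta}\}$, where $\mathcal{F}_{n,k,\boldsymbol\eta}=\{\sum_{i=0}^{k-1}f_ix^i+f_0\sum_{j=0}^{\ell}\eta_jx^{k+j} : f_i\in\mathbb{F}_q\}$; equivalently it is generated by the $k\times n$ matrix whose first row is $\big(v_j(1+\sum_{t=0}^{\ell}\eta_t\alpha_j^{k+t})\big)_{j}$ and whose row $i$ ($1\le i\le k-1$) is $(v_j\alpha_j^{i})_j$. $\mathcal{C}^{\perp}$ is the dual with respect to the standard inner product $\sum_i x_iy_i$. *)

(* Defs.v *)
From HB Require Import structures.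
From mathcomp Require Import all_boot all_order all_algebra all_field.
Set Implicit Arguments. Unset Strict Implicit. Unset Printing Implicit Defensive.
Import GRing.Theory.
Local Open Scope ring_scope.

Definition tgrs_poly (F : fieldType) (k ell : nat) (eta : 'I_ell.+1 -> F)
  (f : nat -> F) : {poly F} :=
  \sum_(i < k) f i *: 'X^i + f 0%N *: \sum_(j < ell.+1) eta j *: 'X^(k + j).

Definition in_tgrs (F : fieldType) (n k ell : nat) (eta : 'I_ell.+1 -> F)
  (alpha v : 'I_n -> F) (c : 'rV[F]_n) : Prop :=
  exists f : nat -> F, c = \row_j (v j * (tgrs_poly k eta f).[alpha j]).

Definition dotv (F : fieldType) (n : nat) (c d : 'rV[F]_n) : F :=
  \sum_(j < n) c 0 j * d 0 j.

Definition in_dual (F : fieldType) (n : nat) (C : 'rV[F]_n -> Prop) (d : 'rV[F]_n) : Prop :=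
  forall c, C c -> dotv c d = 0.

Definition is_LCD (F : fieldType) (n : nat) (C : 'rV[F]_n -> Prop) : Prop :=
  forall c, C c -> in_dual C c -> c = 0.

(* Main.v *)
Require Import Defs.
From HB Require Import structures.
From mathcomp Require Import all_boot all_order all_algebra all_field.
From mathcomp Require Import ring zify.
Import GRing.Theory.
Local Open Scope ring_scope.

Lemma card_natr0 (F : finFieldType) : #|F|%:R = 0 :> F.
Proof.
have h : \sum_(x : F) (x + 1) = \sum_(x : F) x.
  by rewrite [RHS](reindex_inj (addIr 1)).
move: h; rewrite big_split /= sumr_const cardT -cardE.
by move/(congr1 (fun t => t - \sum_(x : F) x)); rewrite /= addrAC !subrr add0r.
Qed.

Lemma natn_neq0 (F : finFieldType) n : (n %| #|F|.-1)%N -> n%:R != 0 :> F.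
Proof.
case/dvdnP=> d hd; apply/negP => /eqP hn.
have h1 : (#|F|.-1)%:R = 0 :> F by rewrite hd natrM hn mulr0.
have := card_natr0 F.
have hc : (0 < #|F|)%N by apply/card_gt0P; exists 0.
by rewrite -(prednK hc) -addn1 natrD h1 add0r => /eqP; rewrite oner_eq0.
Qed.

Section Roots.
Variables (F : fieldType) (n : nat) (lambda : F) (alpha : 'I_n -> F).
Hypotheses (hn0 : (0 < n)%N) (hn : n%:R != 0 :> F) (hl : lambda != 0)
  (hprod : 'X^n - lambda%:P = \prod_(i < n) ('X - (alpha i)%:P)).

Lemma prod_seq : \prod_(i < n) ('X - (alpha i)%:P) = \prod_(x <- [seq alpha i | i <- enum 'I_n]) ('X - x%:P).
Proof. by rewrite big_map big_enum. Qed.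

Lemma alpha_root i : alpha i ^+ n = lambda.
Proof.
have : root ('X^n - lambda%:P) (alpha i).
  by rewrite hprod prod_seq root_prod_XsubC map_f // mem_enum.
by rewrite rootE !hornerE subr_eq0 => /eqP.
Qed.

Lemma alpha_neq0 i : alpha i != 0.
Proof. by apply: contraNneq hl => h; rewrite -(alpha_root i) h expr0n eqn0Ngt hn0. Qed.

Lemma sep : separable_poly ('X^n - lambda%:P).
Proof.
rewrite unlock; apply/Bezout_coprimepP.
exists ((- lambda^-1)%:P, (lambda^-1 / n%:R) *: 'X) => /=.
rewrite derivB derivXn derivC subr0.
case: n hn0 hn => // m _ hm /=.
rewrite -scalerAl mulrnAr -exprS -scaler_nat scalerA mulfVK //.
rewrite mulrBr -polyCM mulNr mulVf // mul_polyC scaleNr (polyCN 1) opprK addrAC addNr add0r polyC1.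
exact: eqpxx.
Qed.

Lemma alpha_inj : injective alpha.
Proof.
have := sep; rewrite hprod prod_seq separable_prod_XsubC => hu.
by apply/injectiveP; move: hu; rewrite /injectiveb /dinjectiveb enumT.
Qed.

Lemma psum m : (0 < m)%N -> (m < n)%N -> \sum_(i < n) alpha i ^+ m = 0.
Proof.
move=> m0 mn; apply/eqP/negPn/negP => hS.
pose i0 := Ordinal hn0.
have hw : forall j, (alpha j / alpha i0) ^+ m = 1.
  move=> j; set w := alpha j / alpha i0.
  have wn : w ^+ n = 1 by rewrite /w expr_div_n !alpha_root divff.
  have hex : forall i, exists i', alpha i' == w * alpha i.
    move=> i; have : root ('X^n - lambda%:P) (w * alpha i).
      by rewrite rootE !hornerE exprMn wn mul1r alpha_root subrr.
    rewrite hprod prod_seq root_prod_XsubC => /mapP [i' _ ->]; by exists i'.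
  pose h i := odflt i [pick i' | alpha i' == w * alpha i].
  have hh : forall i, alpha (h i) = w * alpha i.
    move=> i; rewrite /h; case: pickP => [i' /eqP //|/= hn'].
    by have [i' /eqP hi'] := hex i; have := hn' i'; rewrite hi' eqxx.
  have w0 : w != 0 by rewrite mulf_neq0 ?invr_eq0 ?alpha_neq0.
  have hinj : injective h.
    by move=> a b /(congr1 alpha); rewrite !hh => /(mulfI w0) /alpha_inj.
  have : \sum_(i < n) alpha i ^+ m = \sum_(i < n) alpha (h i) ^+ m := reindex_inj hinj.
  under [X in _ = X -> _]eq_bigr do rewrite hh exprMn.
  rewrite -mulr_sumr => /eqP; rewrite -subr_eq0 -{1}(mul1r (\sum_i _)) -mulrBl mulf_eq0 (negPf hS) orbF.
  by rewrite subr_eq0 eq_sym => /eqP.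
have : (n < (m.+1))%N.
  have -> : m.+1 = size ('X^m - 1 : {poly F}) by rewrite -polyC1 size_XnsubC.
  rewrite -[X in (X < _)%N]size_enum_ord -(size_map (fun j => alpha j / alpha i0) (enum 'I_n)).
  apply: max_poly_roots.
    by rewrite -size_poly_eq0 -polyC1 size_XnsubC.
  apply/allP => x /mapP [j _ ->]; by rewrite rootE !hornerE hw subrr.
  rewrite map_inj_uniq ?enum_uniq //.
  move=> a b /(mulIf (invr_neq0 (alpha_neq0 i0))); exact: alpha_inj.
by rewrite ltnS leqNgt mn.
Qed.

Lemma psum0 : \sum_(i < n) alpha i ^+ 0 = n%:R.
Proof. by rewrite (eq_bigr (fun _ => 1)) // sumr_const card_ord. Qed.

Lemma hsum (h : {poly F}) : (size h <= n)%N -> \sum_(i < n) h.[alpha i] = n%:R * h`_0.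
Proof.
move=> hs.
have : forall i, h.[alpha i] = \sum_(j < n) h`_j * alpha i ^+ j.
  by move=> i; rewrite (horner_coef_wide _ hs).
move=> e; under eq_bigr do rewrite e.
rewrite exchange_big /= (bigD1 (Ordinal hn0)) //= [X in _ + X]big1 ?addr0.
  by rewrite -mulr_sumr psum0 mulrC.
move=> j hj; rewrite -mulr_sumr psum ?mulr0 //.
by rewrite lt0n; apply: contraNneq hj => h0; apply/eqP/val_inj.
Qed.

End Roots.
Lemma card_geq n a : #|[pred j : 'I_n | (a <= j)%N]| = (n - a)%N.
Proof.
rewrite -sum1_card; have e := @big_geq_mkord nat 0%N addn a n xpredT (fun _ => 1%N).
by rewrite /= in e; rewrite -e sum_nat_const_nat muln1.
Qed.

Section TGRS.
Variables (F : fieldType) (k ell : nat) (eta : 'I_ell.+1 -> F).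
Hypothesis hk : (0 < k)%N.

Lemma tgrs_size f : (size (tgrs_poly k eta f) <= k + ell + 1)%N.
Proof.
apply/leq_sizeP => j hj; rewrite /tgrs_poly coefD coefZ !coef_sum.
rewrite big1 ?add0r; last first.
  move=> i _; rewrite coefZ coefXn.
  have -> : (j == i) = false by apply/negbTE; rewrite neq_ltn (leq_trans (ltn_ord i)) ?orbT //; apply: leq_trans hj; rewrite -addnA leq_addr.
  by rewrite mulr0.
rewrite big1 ?mulr0 // => i _; rewrite coefZ coefXn.
have -> : (j == (k + i)%N) = false.
  apply/negbTE; rewrite neq_ltn; apply/orP; right; apply: leq_trans hj.
  by rewrite addn1 ltnS leq_add2l -ltnS ltn_ord.
by rewrite mulr0.
Qed.

Lemma tgrs_coef0 f : (tgrs_poly k eta f)`_0 = f 0%N.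
Proof.
rewrite /tgrs_poly coefD coefZ !coef_sum [X in _ + _ * X]big1; last first.
  by move=> i _; rewrite coefZ coefXn eq_sym addn_eq0 (negbTE (lt0n_neq0 hk)) mulr0.
rewrite mulr0 addr0 (bigD1 (Ordinal hk)) //= big1 ?addr0.
  by rewrite coefZ coefXn eqxx mulr1.
move=> i hi; rewrite coefZ coefXn; case: eqP => [h|]; last by rewrite mulr0.
by case/negP: hi; apply/eqP/val_inj.
Qed.

Lemma tgrs_f00 f : f 0%N = 0 -> (size (tgrs_poly k eta f) <= k)%N.
Proof.
move=> h0; rewrite /tgrs_poly h0 scale0r addr0 -poly_def; exact: size_poly.
Qed.

Lemma tgrs_of_poly (P : {poly F}) : P`_0 = 0 -> (size P <= k)%N ->
  tgrs_poly k eta (fun i => P`_i) = P.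
Proof.
move=> h0 hs; rewrite /tgrs_poly h0 scale0r addr0 -poly_def.
apply/polyP => i; rewrite coef_poly; case: ltnP => // hi.
by rewrite nth_default // (leq_trans hs hi).
Qed.
End TGRS.

Theorem theorem4p3 (F : finFieldType) (n : nat) (lambda : F) (alpha : 'I_n -> F)
  (ell : nat) (eta : 'I_ell.+1 -> F) (k : nat) (v : 'I_n -> F) :
  odd #|F| ->
  (0 < n)%N ->
  (n %| #|F|.-1)%N ->
  lambda != 0 ->
  lambda ^+ (#|F|.-1 %/ n) = 1 ->
  'X^n - lambda%:P = \prod_(i < n) ('X - (alpha i)%:P) ->
  (exists j, eta j != 0) ->
  (2 <= k)%N ->
  (2 * k + 2 * ell + 1 <= n)%N ->
  (forall i : 'I_n, (i < n - k + 1)%N -> v i = 1 \/ v i = -1) ->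
  (forall i : 'I_n, (n - k + 1 <= i)%N -> v i \notin [:: -1; 0; 1]) ->
  is_LCD (in_tgrs k eta alpha v).
Proof.
move=> hodd hn0 hdvd hl hpow hprod heta hk2 hkn hv1 hv2.
have hn := @natn_neq0 F n hdvd.
have hk : (0 < k)%N by apply: leq_trans hk2.
have ainj := @alpha_inj _ _ _ _ hn0 hn hl hprod.
have anz := @alpha_neq0 _ _ _ _ hn0 hl hprod.
have hsumn := @hsum _ _ _ _ hn0 hn hl hprod.
pose T := [pred j : 'I_n | (n - k + 1 <= j)%N].
have hT : #|T| = k.-1.
  rewrite card_geq; lia.
pose w j := v j ^+ 2 - 1.
have w0 : forall j, ~~ T j -> w j = 0.
  move=> j; rewrite /= -ltnNge /w => /hv1 [] ->; by rewrite ?sqrrN expr1n subrr.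
have w1 : forall j, T j -> w j != 0.
  move=> j /hv2; rewrite /w subr_eq0 sqrf_eq1 !inE; apply: contra => /orP [] ->; by rewrite ?orbT.
move=> c [f ->] hdual.
set P := tgrs_poly k eta f.
have key : forall g, dotv (\row_j (v j * (tgrs_poly k eta g).[alpha j]))
   (\row_j (v j * P.[alpha j])) = n%:R * g 0%N * f 0%N +
   \sum_j w j * (tgrs_poly k eta g).[alpha j] * P.[alpha j].
  move=> g; rewrite /dotv.
  under eq_bigr do rewrite !mxE.
  set G := tgrs_poly k eta g.
  have -> : \sum_j (v j * G.[alpha j]) * (v j * P.[alpha j]) =
     \sum_j (G * P).[alpha j] + \sum_j w j * G.[alpha j] * P.[alpha j].
    rewrite -big_split /=; apply: eq_bigr => j _; rewrite hornerM /w; ring.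
  rewrite hsumn ?coef0M ?(tgrs_coef0 _ _ _ _ hk) ?mulrA //.
  apply: leq_trans (size_polyMleq _ _) _.
  have := tgrs_size F k ell eta g; have := tgrs_size F k ell eta f; rewrite -/G -/P.
  move=> h1 h2; apply: leq_trans hkn; rewrite -subn1 leq_subLR.
  apply: leq_trans (leq_add h2 h1) _; rewrite !mul2n -!addnn; lia.
have hd : forall g, dotv (\row_j (v j * (tgrs_poly k eta g).[alpha j]))
   (\row_j (v j * P.[alpha j])) = 0.
  by move=> g; apply: hdual; exists g.
have step1 : forall s, T s -> P.[alpha s] = 0.
  move=> s hs.
  pose A := [pred j : 'I_n | T j && (j != s)].
  pose Q := \prod_(j <- enum A) ('X - (alpha j)%:P).
  pose G := 'X * Q.
  have hQ : Q = \prod_(x <- map alpha (enum A)) ('X - x%:P) by rewrite big_map.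
  have cA : #|A| = k.-2.
    have := cardD1x hs; rewrite -/T.
    have -> : #|SimplPred T| = #|T| by apply: eq_card.
    by rewrite hT => /(congr1 predn); rewrite add1n /= => ->.
  have sQ : size Q = #|A|.+1 by rewrite hQ size_prod_XsubC size_map cardE.
  have Q0 : Q != 0 by rewrite -size_poly_eq0 sQ.
  have sG : (size G <= k)%N.
    rewrite /G mulrC size_mulX // sQ cA; lia.
  have G0 : G`_0 = 0 by rewrite coefXM.
  have := hd (fun i => G`_i); rewrite key (tgrs_of_poly F k ell eta G) // G0 mulr0 mul0r add0r.
  rewrite (bigD1 s) //= big1 ?addr0.
    move/eqP; rewrite !mulf_eq0 (negbTE (w1 _ hs)) /=.
    have -> : (G.[alpha s] == 0) = false.
      apply/negbTE; rewrite /G hornerM hornerX mulf_eq0 negb_or anz /=.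
      rewrite -/(root Q (alpha s)) hQ root_prod_XsubC (mem_map ainj) mem_enum /= inE hs /=.
      by rewrite eqxx.
    by move/eqP.
  move=> j hj; case: (boolP (T j)) => hTj; last by rewrite w0 // !mul0r.
  have : root Q (alpha j) by rewrite hQ root_prod_XsubC (mem_map ainj) mem_enum /A inE /=; apply/andP.
  by rewrite /G hornerM => /eqP ->; rewrite !mulr0 mul0r.
have f0 : f 0%N = 0.
  have := hd (fun i => if i == 0%N then 1 else 0); rewrite key /= mulr1 big1 ?addr0.
    by move/eqP; rewrite mulf_eq0 (negbTE hn) /= => /eqP.
  move=> j _; case: (boolP (T j)) => hTj; first by rewrite step1 // mulr0.
  by rewrite w0 // !mul0r.
have P0 : P = 0.
  apply/eqP/negPn/negP => hP.
  have sP : (size P <= k)%N by exact: (tgrs_f00 F k ell eta f f0).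
  have hr : all (root P) (0 :: map alpha (enum T)).
    apply/andP; split; first by rewrite rootE horner_coef0 /P (tgrs_coef0 _ _ _ _ hk) f0.
    by apply/allP => x /mapP [j hj ->]; rewrite rootE step1 //; move: hj; rewrite mem_enum.
  have hu : uniq (0 :: map alpha (enum T)).
    rewrite /= map_inj_uniq ?enum_uniq // andbT.
    by apply/mapP => [[j _ /esym/eqP]]; rewrite (negbTE (anz j)).
  have := max_poly_roots hP hr hu.
  rewrite /= size_map -cardE hT prednK // => /leq_trans /(_ sP); by rewrite ltnn.
by apply/rowP => j; rewrite !mxE -/P P0 horner0 mulr0.
Qed.
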